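(* Let $q=2^h$, $m\ge1$, and on $V=\mathbb{F}_q^{2m}$ let $\langle u,v\rangle=uFv^T$ with $F=\begin{pmatrix}0&I_m\\ I_m&0\end{pmatrix}$, $\vartheta_0(u)=uEu^T$ with $E=\begin{pmatrix}0&I_m\\0&0\end{pmatrix}$, and $\vartheta_a(u)=\vartheta_0(u)+\langle a,u\rangle^2$ for $a\in V$. For $c\in V$ let $T_c:V\to V$, $u\mapsto u+\langle u,c\rangle c$ be the symplectic transvection, and for a quadratic form $\Theta$ and invertible linear $A$ put $\Theta^A(u)=\Theta(uA^{-1})$. Let $a,b\in V$, $a\neq b$. The following are equivalent: (i) there exists $c\in V$ with $\vartheta_a^{T_c}=\vartheta_b$; (ii) there exists $\gamma\in\mathbb{F}_q^*$ with $\vartheta_a^{T_{\gamma(a+b)}}=\vartheta_b$; (iii) $\mathrm{Tr}_{\mathbb{F}_q/\mathbb{F}_2}(\vartheta_0(a))=\mathrm{Tr}_{\mathbb{F}_q/\mathbb{F}_2}(\vartheta_0(b))$; (iv) the polynomial $t^2+t+\vartheta_0(a)+\vartheta_0(b)$ is reducible over $\mathbb{F}_q$. *)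

(* Defs.v *)
From HB Require Import structures.
From mathcomp Require Import all_boot all_order all_algebra all_field.
Set Implicit Arguments. Unset Strict Implicit. Unset Printing Implicit Defensive.
Import GRing.Theory.
Local Open Scope ring_scope.

Section Forms.
Variables (K : fieldType) (m : nat).

Definition Fmx : 'M[K]_(m + m) := block_mx 0 1%:M 1%:M 0.
Definition Emx : 'M[K]_(m + m) := block_mx 0 1%:M 0 0.

Definition bform (u v : 'rV[K]_(m + m)) : K := (u *m Fmx *m v^T) 0 0.
Definition theta0 (u : 'rV[K]_(m + m)) : K := (u *m Emx *m u^T) 0 0.
Definition theta (a u : 'rV[K]_(m + m)) : K := theta0 u + (bform a u) ^+ 2.

(* matrix of the transvection T_c : u |-> u + <u,c> c  (acting on row vectors) *)
Definition transv (c : 'rV[K]_(m + m)) : 'M[K]_(m + m) :=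
  1%:M + Fmx *m c^T *m c.

Definition qf_act (Th : 'rV[K]_(m + m) -> K) (A : 'M[K]_(m + m))
  : 'rV[K]_(m + m) -> K := fun u => Th (u *m invmx A).
End Forms.

Definition trace2 (K : fieldType) (h : nat) (x : K) : K :=
  \sum_(i < h) x ^+ (2 ^ i).

(* Main.v *)
Require Import Defs.
From HB Require Import structures.
From mathcomp Require Import all_boot all_order all_algebra all_field.
From mathcomp Require Import ring.
Set Implicit Arguments. Unset Strict Implicit. Unset Printing Implicit Defensive.
Import GRing.Theory.
Local Open Scope ring_scope.

Section NT.
Variables (h : nat) (K : finFieldType).
Hypothesis hK : #|K| = (2 ^ h)%N.

Lemma char2 : (2 \in [pchar K])%N.
Proof. exact: (card_finPcharP hK). Qed.

Lemma add2 (x : K) : x + x = 0.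
Proof. exact: (addrr_pchar2 char2). Qed.

Lemma opp2 (x : K) : - x = x.
Proof. exact: (oppr_pchar2 char2). Qed.

Lemma frob (x y : K) : (x + y) ^+ 2 = x ^+ 2 + y ^+ 2.
Proof. by rewrite sqrrD (mulrn_pchar char2) addr0. Qed.

Lemma frobn i (x y : K) : (x + y) ^+ (2 ^ i) = x ^+ (2 ^ i) + y ^+ (2 ^ i).
Proof.
elim: i => [|i IH]; first by rewrite !expr1.
by rewrite expnSr !exprM IH frob.
Qed.

Lemma h_gt0 : (0 < h)%N.
Proof.
case: h hK => // H.
have : (1 < #|K|)%N.
  apply/card_gt1P; exists 0, 1; rewrite !inE; split => //.
  by rewrite eq_sym oner_eq0.
by rewrite H.
Qed.

Lemma traceD (x y : K) : trace2 h (x + y) = trace2 h x + trace2 h y.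
Proof. by rewrite /trace2 -big_split; apply: eq_bigr => i _; rewrite frobn. Qed.

Lemma trace_AS (z : K) : trace2 h (z ^+ 2 + z) = 0.
Proof.
rewrite traceD /trace2.
have [n hn] : exists n, h = n.+1 by move: h_gt0; case: (h) => // n; exists n.
rewrite hn.
have -> : \sum_(i < n.+1) (z ^+ 2) ^+ (2 ^ i) = \sum_(i < n.+1) z ^+ (2 ^ i.+1).
  by apply: eq_bigr => i _; rewrite -exprM -expnS.
rewrite big_ord_recr big_ord_recl /= -hn -hK expf_card expr1.
have -> : \sum_(i < n) z ^+ (2 ^ bump 0 i) = \sum_(i < n) z ^+ (2 ^ i.+1).
  by apply: eq_bigr => i _; rewrite /bump add1n.
set S := \sum_(i < n) _.
by rewrite addrA -(addrA S) add2 addr0 add2.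
Qed.

Definition AS (z : K) := z ^+ 2 + z.

Lemma AS_fiber x y : AS x = AS y -> x = y \/ x = y + 1.
Proof.
rewrite /AS => E.
have E2 : (x + y) ^+ 2 = x + y.
  rewrite frob.
  have : x ^+ 2 + x + (y ^+ 2 + y) = 0 by rewrite E add2.
  move=> H; apply/eqP; rewrite -subr_eq0 opp2; apply/eqP; rewrite -H.
  by rewrite addrACA.
have : (x + y) * (x + y - 1) = 0 by rewrite mulrBr mulr1 -expr2 E2 subrr.
move/eqP; rewrite mulf_eq0 => /orP[] /eqP H.
  by left; apply/eqP; rewrite -subr_eq0 opp2 H.
right; apply/eqP; rewrite -subr_eq0 opp2 -H opp2.
by rewrite addrA.
Qed.

Definition Tpoly : {poly K} := \sum_(i < h) 'X^(2 ^ i).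

Lemma Tpoly_eval y : Tpoly.[y] = trace2 h y.
Proof. by rewrite /Tpoly horner_sum; apply: eq_bigr => i _; rewrite hornerXn. Qed.

Lemma size_sumX n : (size (\sum_(i < n) ('X^(2 ^ i) : {poly K}))%R <= 2 ^ n)%N.
Proof.
elim: n => [|n IH]; first by rewrite big_ord0 size_poly0.
rewrite big_ord_recr /=; apply: leq_trans (size_polyD _ _) _.
rewrite geq_max size_polyXn expnS mul2n -addnn.
rewrite (leq_trans IH) ?leq_addr //= -addn1 leq_add2l expn_gt0.
by [].
Qed.

Lemma size_Tpoly : size Tpoly = (2 ^ h.-1).+1.
Proof.
have [n hn] : exists n, h = n.+1 by move: h_gt0; case: (h) => // n; exists n.
rewrite /Tpoly hn /=.
rewrite big_ord_recr /= addrC size_polyDl size_polyXn //.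
by rewrite ltnS size_sumX.
Qed.

Lemma card_ker : (#|[set y : K | trace2 h y == 0%R]| <= 2 ^ h.-1)%N.
Proof.
have nz : Tpoly != 0 by rewrite -size_poly_eq0 size_Tpoly.
have := max_poly_roots nz (rs := enum [set y : K | trace2 h y == 0]).
rewrite enum_uniq -cardE size_Tpoly ltnS; apply => //.
by apply/allP => y; rewrite mem_enum inE /root Tpoly_eval.
Qed.

Lemma card_AS : (#|K| <= 2 * #|[set AS z | z : K]|)%N.
Proof.
pose r (y : K) := odflt 0 [pick z | AS z == y].
have rP z : AS (r (AS z)) = AS z.
  rewrite /r; case: pickP => [w /eqP //|/(_ z)]; by rewrite eqxx.
pose g z := (AS z, z == r (AS z)).
have ginj : injective g.
  move=> x y [] Exy Eb; rewrite -Exy in Eb.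
  case: (boolP (x == r (AS x))) Eb => Hx Eb.
    by move/esym/eqP: Eb => ->; apply/eqP.
  have Hy : y != r (AS x) by rewrite -Eb.
  have [Hx'|Hx'] := AS_fiber (rP x); first by rewrite Hx' eqxx in Hx.
  have [Hy'|Hy'] := AS_fiber (etrans (rP x) Exy); first by rewrite Hy' eqxx in Hy.
  by apply: (addIr 1); rewrite -Hx' -Hy'.
have := card_imset [set: K] ginj; rewrite cardsT => <-.
rewrite mulnC -card_bool -cardsT -cardsX; apply: subset_leq_card.
by apply/subsetP => _ /imsetP[z _ ->]; rewrite !inE /= imset_f.
Qed.

Lemma trace0_root (e : K) : trace2 h e = 0 -> exists z, z ^+ 2 + z = e.
Proof.
move=> He.
set S := [set AS z | z : K]; set Z := [set y : K | trace2 h y == 0].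
have SZ : S \subset Z by apply/subsetP => _ /imsetP[z _ ->]; rewrite inE trace_AS.
have : (#|Z| <= #|S|)%N.
  apply: leq_trans card_ker _.
  rewrite -(leq_pmul2l (isT : (0 < 2)%N)) -expnS prednK ?h_gt0 // -hK.
  exact: card_AS.
move=> le; have := subset_leqif_cards SZ.
move=> [_]; rewrite eqn_leq le subset_leq_card // => /esym /eqP SZe.
have : e \in Z by rewrite inE He.
by rewrite -SZe => /imsetP[z _ ->]; exists z.
Qed.

Lemma root_trace0 (e : K) : (exists z, z ^+ 2 + z = e) <-> trace2 h e = 0.
Proof.
split; first by move=> [z <-]; exact: trace_AS.
exact: trace0_root.
Qed.

Lemma sqrt_ex (x : K) : exists s, s ^+ 2 = x.
Proof.
exists (x ^+ (2 ^ h.-1)); rewrite -exprM -expnSr prednK ?h_gt0 // -hK.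
exact: expf_card.
Qed.

Lemma sq_inj (x y : K) : x ^+ 2 = y ^+ 2 -> x = y.
Proof.
move=> E; have : (x + y) ^+ 2 = 0 by rewrite frob E add2.
move/eqP; rewrite expf_eq0 /= => /eqP H.
by apply/eqP; rewrite -subr_eq0 opp2 H.
Qed.

End NT.
Section LA.
Variables (K : fieldType) (m : nat).
Hypothesis ch2 : (2 \in [pchar K])%N.
Local Notation V := 'rV[K]_(m + m).

Lemma add2' (x : K) : x + x = 0.
Proof. exact: (addrr_pchar2 ch2). Qed.

Lemma bformDl (u v w : V) : bform (u + v) w = bform u w + bform v w.
Proof. by rewrite /bform !mulmxDl mxE. Qed.

Lemma bformDr (u v w : V) : bform u (v + w) = bform u v + bform u w.
Proof. by rewrite /bform linearD /= mulmxDr mxE. Qed.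

Lemma bformZl k (u w : V) : bform (k *: u) w = k * bform u w.
Proof. by rewrite /bform -!scalemxAl mxE. Qed.

Lemma bformZr k (u w : V) : bform u (k *: w) = k * bform u w.
Proof. by rewrite /bform linearZ /= -scalemxAr mxE. Qed.

Lemma mx11T (A : 'M[K]_1) : A 0 0 = A^T 0 0.
Proof. by rewrite mxE. Qed.

Lemma trF : (Fmx K m)^T = Fmx K m.
Proof. by rewrite /Fmx tr_block_mx !trmx0 trmx1. Qed.

Lemma bform_sym (u v : V) : bform u v = bform v u.
Proof.
by rewrite /bform mx11T !trmx_mul trmxK trF mulmxA.
Qed.

Lemma mx11D (A B : 'M[K]_1) : (A + B) 0 0 = A 0 0 + B 0 0.
Proof. by rewrite mxE. Qed.

Lemma theta0D (u v : V) : theta0 (u + v) = theta0 u + theta0 v + bform u v.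
Proof.
rewrite /theta0 /bform linearD /= !mulmxDl !mulmxDr !mx11D.
have -> : (v *m Emx K m *m u^T) 0 0 = (u *m (Emx K m)^T *m v^T) 0 0.
  by rewrite mx11T !trmx_mul trmxK mulmxA.
have <- : (u *m Emx K m *m v^T) 0 0 + (u *m (Emx K m)^T *m v^T) 0 0 =
          (u *m Fmx K m *m v^T) 0 0.
  rewrite -mx11D -mulmxDl -mulmxDr; congr ((u *m _ *m _) 0 0).
  by rewrite /Emx /Fmx tr_block_mx !trmx0 trmx1 add_block_mx !addr0 !add0r.
ring.
Qed.

Lemma theta0Z k (u : V) : theta0 (k *: u) = k ^+ 2 * theta0 u.
Proof. by rewrite /theta0 linearZ /= -scalemxAr -!scalemxAl !mxE mulrA expr2. Qed.

Lemma theta00 : theta0 (0 : V) = 0.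
Proof. by rewrite /theta0 mul0mx mul0mx mxE. Qed.

Lemma bform_alt (u : V) : bform u u = 0.
Proof.
have := theta0D u u.
have -> : u + u = 2%:R *: u by rewrite scaler_nat mulr2n.
rewrite theta0Z (pcharf0 ch2) expr0n /= mul0r add2' add0r.
by move=> ->.
Qed.

Lemma FF : Fmx K m *m Fmx K m = 1%:M.
Proof.
rewrite /Fmx mulmx_block !mulmx0 !mul0mx !mulmx1 !addr0 !add0r.
by rewrite [RHS]scalar_mx_block.
Qed.

Lemma bform_nondeg (d : V) : (forall u, bform d u = 0) -> d = 0.
Proof.
move=> H.
have dF : d *m Fmx K m = 0.
  apply/matrixP => i j; rewrite (ord1 i) [RHS]mxE.
  rewrite -(H (delta_mx 0 j)) /bform trmx_delta -colE.
  by rewrite [RHS]mxE.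
by rewrite -[d]mulmx1 -FF mulmxA dF mul0mx.
Qed.

Lemma transvE (c u : V) : u *m transv c = u + bform u c *: c.
Proof.
rewrite /transv mulmxDr mulmx1 !mulmxA; congr (_ + _).
by rewrite [u *m _ *m _]mx11_scalar mul_scalar_mx.
Qed.

Lemma transv_inv (c : V) : invmx (transv c) = transv c.
Proof.
have TT : transv c *m transv c = 1%:M.
  apply/row_matrixP => i.
  rewrite row_mul.
  have -> : row i (transv c) = row i 1%:M *m transv c by rewrite -row_mul mul1mx.
  rewrite transvE transvE.
  rewrite bformDl bformZl bform_alt mulr0 addr0 -addrA -scalerDl add2' scale0r addr0.
  by [].
have [U _] := mulmx1_unit TT.
by rewrite -[LHS]mulmx1 -TT mulmxA mulVmx // mul1mx.
Qed.

Lemma sqrD (x y : K) : (x + y) ^+ 2 = x ^+ 2 + y ^+ 2.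
Proof. by rewrite sqrrD (mulrn_pchar ch2) addr0. Qed.

Lemma qf_transv (a c u : V) :
  qf_act (theta a) (transv c) u = theta a u + (bform c u) ^+ 2 * (1 + theta a c).
Proof.
rewrite /qf_act transv_inv transvE /theta theta0D theta0Z bformDr bformZr.
rewrite bformZr bform_sym sqrD exprMn.
set w := bform c u; set x := bform a u; set y := bform a c.
rewrite -expr2.
ring.
Qed.
End LA.

Section Main.
Variables (h : nat) (K : finFieldType).
Hypothesis hK : #|K| = (2 ^ h)%N.
Variable m : nat.
Local Notation V := 'rV[K]_(m + m).
Let ch2 := char2 hK.

Lemma oppV2 (v : V) : - v = v.
Proof. by rewrite -scaleN1r (opp2 hK) scale1r. Qed.

Lemma eq2 (p q : K) : (p = q) <-> (p + q = 0).
Proof.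
split => [->|H]. exact: (add2 hK q).
by apply/eqP; rewrite -subr_eq0 (opp2 hK) H.
Qed.

Lemma cond_iff (a b c : V) :
  (forall u, qf_act (theta a) (transv c) u = theta b u) <->
  (forall u, (bform (a + b) u) ^+ 2 = (bform c u) ^+ 2 * (1 + theta a c)).
Proof.
have E u : (qf_act (theta a) (transv c) u = theta b u) <->
           ((bform (a + b) u) ^+ 2 = (bform c u) ^+ 2 * (1 + theta a c)).
  rewrite qf_transv // /theta bformDl sqrD //.
  rewrite eq2 [X in _ <-> X]eq2.
  set A := theta0 u; set X := bform a u ^+ 2; set Y := bform b u ^+ 2.
  set W := _ * _.
  have -> : A + X + W + (A + Y) = X + Y + W + (A + A) by ring.
  by rewrite (add2 hK) addr0.
by split => H u; apply/E.
Qed.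

Lemma theta_scale (a d : V) g :
  theta a (g *: d) = g ^+ 2 * (theta0 d + bform a d ^+ 2).
Proof. by rewrite /theta theta0Z bformZr exprMn mulrDr. Qed.

Lemma scal_cond (d : V) (L : K) : d != 0 ->
  (forall u, bform d u ^+ 2 = bform d u ^+ 2 * L) -> L = 1.
Proof.
move=> dn0 H; case: (eqVneq L 1) => // hL.
case/eqP: dn0; apply: bform_nondeg => u.
have : bform d u ^+ 2 * (1 - L) = 0 by rewrite mulrBr mulr1 -H subrr.
move/eqP; rewrite mulf_eq0 subr_eq0 [1 == L]eq_sym (negbTE hL) orbF expf_eq0 /=.
by move/eqP.
Qed.

Lemma dn0 (a b : V) : a != b -> a + b != 0.
Proof. by move=> hab; rewrite addr_eq0 oppV2. Qed.

Definition kk (a b : V) := theta0 (a + b) + bform a (a + b) ^+ 2.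

Lemma P2_iff (a b : V) : a != b ->
  (exists2 g : K, g != 0 &
     forall u, qf_act (theta a) (transv (g *: (a + b))) u = theta b u) <->
  (exists2 g : K, g != 0 & g ^+ 2 * (1 + g ^+ 2 * kk a b) = 1).
Proof.
move=> hab.
have E g : (forall u, qf_act (theta a) (transv (g *: (a + b))) u = theta b u) <->
           g ^+ 2 * (1 + g ^+ 2 * kk a b) = 1.
  rewrite cond_iff theta_scale; split => H.
    apply: (scal_cond (dn0 hab)) => u; rewrite [LHS]H bformZl /kk; ring.
  by move=> u; rewrite bformZl -/(kk a b) exprMn mulrAC H mul1r.
by split => -[g gn0 H]; exists g => //; apply/E.
Qed.

Lemma kkE (a b : V) : kk a b = theta0 a + theta0 b + bform a b + bform a b ^+ 2.
Proof. by rewrite /kk theta0D bformDr bform_alt // add0r. Qed.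

Lemma P2'_iff (a b : V) :
  (exists2 g : K, g != 0 & g ^+ 2 * (1 + g ^+ 2 * kk a b) = 1) <->
  (exists z : K, z ^+ 2 + z = theta0 a + theta0 b).
Proof.
set k := kk a b; set e := theta0 a + theta0 b; set w := bform a b.
have ke : k = e + w + w ^+ 2 by rewrite /k kkE.
have step : (exists t : K, t ^+ 2 - t = k) <-> (exists z : K, z ^+ 2 + z = e).
  split => -[t Ht].
    exists (t + w); move: Ht; rewrite (opp2 hK) ke sqrD // => Ht.
    apply: (addIr (w + w ^+ 2)); rewrite [RHS]addrA -Ht.
    have -> : t ^+ 2 + w ^+ 2 + (t + w) + (w + w ^+ 2) =
              t ^+ 2 + t + ((w + w) + (w ^+ 2 + w ^+ 2)) by ring.
    by rewrite (add2 hK w) (add2 hK (w ^+ 2)) !addr0.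
  exists (t + w); rewrite (opp2 hK) ke sqrD // -Ht; ring.
rewrite -step; split.
  move=> [g gn0 H]; exists ((g ^-1) ^+ 2).
  have -> : k = (g ^+ 2 * (1 + g ^+ 2 * k) - g ^+ 2) / g ^+ 4.
    by field.
  by rewrite H; field.
move=> [t Ht]; case: (eqVneq t 0) => [t0|tn0].
  by exists 1; rewrite ?oner_eq0 // -Ht t0 expr0n /= subr0 !mulr0 !addr0 expr1n mulr1.
have [y Hy] := sqrt_ex hK t.
have yn0 : y != 0 by apply: contraNneq tn0 => y0; rewrite -Hy y0 expr0n.
exists (y ^-1); first by rewrite invr_eq0.
rewrite -Ht -Hy; field; by rewrite yn0.
Qed.

Lemma P4_iff (e : K) :
  (~ irreducible_poly ('X^2 + 'X + e%:P)) <-> (exists z : K, z ^+ 2 + z = e).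
Proof.
have sz : size ('X^2 + 'X + e%:P : {poly K}) = 3%N.
  rewrite -addrA size_polyDl; first by rewrite size_polyXn.
  rewrite size_polyXn. apply: (leq_ltn_trans (size_polyD _ _)). rewrite gtn_max size_polyX size_polyC. by case: (e != 0).
have rt z : root ('X^2 + 'X + e%:P) z = (z ^+ 2 + z == e) .
  by rewrite /root !hornerE addr_eq0 (opp2 hK e).
split.
  move=> Nirr; case: (boolP [exists z : K, z ^+ 2 + z == e]) => [/existsP[z /eqP] | Hn].
    by exists z.
  exfalso; apply: Nirr; apply: cubic_irreducible; first by rewrite sz.
  by move=> z; rewrite rt; apply: contra Hn => Hz; apply/existsP; exists z.
move=> [z Hz] Irr.
have : root ('X^2 + 'X + e%:P) z by rewrite rt Hz.
move/factor_theorem => [q Hq].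
have [_ /(_ ('X - z%:P))] := Irr.
rewrite size_XsubC Hq dvdp_mulIr => /(_ isT isT) /eqp_size.
by rewrite -Hq sz size_XsubC.
Qed.

End Main.

Theorem lemmaA6 (h : nat) (K : finFieldType) (hK : #|K| = (2 ^ h)%N)
  (m : nat) (hm : (0 < m)%N) (a b : 'rV[K]_(m + m)) (hab : a != b) :
  let P1 := exists c : 'rV[K]_(m + m),
              forall u, qf_act (theta a) (transv c) u = theta b u in
  let P2 := exists2 g : K, g != 0 &
              forall u, qf_act (theta a) (transv (g *: (a + b))) u = theta b u in
  let P3 := trace2 h (theta0 a) = trace2 h (theta0 b) in
  let P4 := ~ irreducible_poly ('X^2 + 'X + (theta0 a + theta0 b)%:P) in
  [/\ (P1 <-> P2), (P2 <-> P3) & (P3 <-> P4)].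
Proof.
move=> P1 P2 P3 P4.
have ch2 := char2 hK.
have P3E : P3 <-> trace2 h (theta0 a + theta0 b) = 0.
  rewrite /P3 (traceD hK); exact: (eq2 hK).
have P3R : P3 <-> exists z : K, z ^+ 2 + z = theta0 a + theta0 b.
  apply: (iff_trans P3E); exact: (iff_sym (root_trace0 hK _)).
split.
- split; last by move=> [g _ H]; exists (g *: (a + b)).
  move=> [c] /(cond_iff hK) H.
  have [s Hs] := sqrt_ex hK (1 + theta a c).
  have E : a + b = s *: c.
    apply/eqP; rewrite -subr_eq0 (oppV2 hK); apply/eqP; apply: bform_nondeg => u.
    rewrite bformDl bformZl; apply: (proj1 (eq2 hK _ _)).
    by apply: (sq_inj hK); rewrite H exprMn Hs mulrC.
  have sn0 : s != 0.
    by apply: contraNneq (dn0 hK hab) => s0; rewrite E s0 scale0r.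
  exists (s ^-1); first by rewrite invr_eq0.
  by rewrite E scalerA mulVf // scale1r; apply/(cond_iff hK).
- apply: (iff_trans (P2_iff hK hab)); apply: (iff_trans (P2'_iff hK a b)).
  exact: iff_sym.
- apply: (iff_trans P3R); exact: (iff_sym (P4_iff hK _)).
Qed.
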